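(* Let $\varphi\colon (A,m,K)\to (B,n,L)$ and $\psi\colon B\to C$ be local homomorphisms of noetherian local rings. Let $\psi_{mB}\colon B/mB\to C/mC$ be the induced map and $\pi_{mB}\colon B\to B/mB$, $\pi_{mC}\colon C\to C/mC$ the canonical surjections. Then $$\operatorname{rd}(\psi\circ\varphi)=\operatorname{rd}(\varphi)+\operatorname{rd}(\psi)-\operatorname{rd}(\psi_{mB})=\operatorname{rd}(\varphi)+(\operatorname{rd}(\pi_{mB})-\operatorname{rd}(\pi_{mC})).$$ Consequently, $\operatorname{rd}(\varphi)\leq\operatorname{rd}(\psi\circ\varphi)\leq\operatorname{rd}(\varphi)+\operatorname{rd}(\psi)$.
   Context: All rings are commutative and noetherian with identity. A local homomorphism $\varphi\colon (A,m,K)\to(B,n,L)$ satisfies $\varphi(m)\subseteq n$. The regularity defect $\operatorname{rd}(\varphi)$ is the $L$-dimension of the kernel of the natural $L$-linear map $m/m^2\otimes_K L\to n/n^2$, $\bar x\otimes\bar b\mapsto \overline{\varphi(x)b}$. *)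

(* Defs.v *)
From HB Require Import structures.
From mathcomp Require Import all_boot all_order all_algebra.
From Stdlib Require Import ClassicalEpsilon.
Set Implicit Arguments. Unset Strict Implicit. Unset Printing Implicit Defensive.
Import Order.TTheory GRing.Theory Num.Theory.
Local Open Scope ring_scope.

Definition is_ideal (R : comUnitRingType) (I : R -> Prop) : Prop :=
  [/\ I 0, (forall x y, I x -> I y -> I (x + y)) & (forall r x, I x -> I (r * x))].

Definition in_span (R : comUnitRingType) (n : nat) (g : 'I_n -> R) (x : R) : Prop :=
  exists c : 'I_n -> R, x = \sum_(i < n) c i * g i.

Definition noetherian (R : comUnitRingType) : Prop :=
  forall I : R -> Prop, is_ideal I ->
    exists n (g : 'I_n -> R), forall x, I x <-> in_span g x.

Definition maxI (R : comUnitRingType) : R -> Prop := fun x => x \isn't a GRing.unit.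

(* local ring: the non-units form an ideal (1 <> 0 holds in a nzRing) *)
Definition is_local (R : comUnitRingType) : Prop := is_ideal (@maxI R).

Definition noeth_local (R : comUnitRingType) : Prop := noetherian R /\ is_local R.

Definition local_hom (A B : comUnitRingType) (f : {rmorphism A -> B}) : Prop :=
  forall x, maxI x -> maxI (f x).

Definition zeroI (R : comUnitRingType) : R -> Prop := fun x => x = 0.

Definition sqI (R : comUnitRingType) (I : R -> Prop) (x : R) : Prop :=
  exists n (a b : 'I_n -> R), (forall i, I (a i) /\ I (b i)) /\
    x = \sum_(i < n) a i * b i.

Definition addI (R : comUnitRingType) (I J : R -> Prop) (x : R) : Prop :=
  exists a b, I a /\ J b /\ x = a + b.

Definition extI (A B : comUnitRingType) (f : A -> B) (I : A -> Prop) (y : B) : Prop :=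
  exists n (a : 'I_n -> A) (c : 'I_n -> B), (forall i, I (a i)) /\
    y = \sum_(i < n) c i * f (a i).

(* the largest d with P d (0 if it does not exist; it does in the cases used) *)
Definition maxdim (P : nat -> Prop) : nat :=
  epsilon (inhabits 0%N) (fun d => P d /\ forall e, P e -> (e <= d)%N).

(* Consider f : A -> B inducing a local homomorphism fbar : A/I -> B/J
   (I ⊆ m_A, J ⊆ m_B ideals, f(I) ⊆ J).  Then A/I has maximal ideal m/I,
   cotangent space (m/I)/(m/I)^2 = m/(m^2 + I) over K = A/m, and likewise
   B/J has cotangent space n/(n^2 + J) over L = B/n. *)

(* dim_K of m/(m^2+I) : maximal number of K-linearly independent elements *)
Definition cotdim (A : comUnitRingType) (I : A -> Prop) : nat :=
  maxdim (fun r => exists x : 'I_r -> A, (forall i, maxI (x i)) /\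
    forall a : 'I_r -> A,
      addI (sqI (@maxI A)) I (\sum_(i < r) a i * x i) -> forall i, maxI (a i)).

(* dim_L of the L-span of the image of m/(m^2+I) in n/(n^2+J), i.e. the
   dimension of the image of the L-linear map  m/(m^2+I) (x)_K L -> n/(n^2+J) *)
Definition imdim (A B : comUnitRingType) (f : A -> B)
    (I : A -> Prop) (J : B -> Prop) : nat :=
  maxdim (fun s => exists x : 'I_s -> A, (forall i, maxI (x i)) /\
    forall b : 'I_s -> B,
      addI (sqI (@maxI B)) J (\sum_(i < s) b i * f (x i)) -> forall i, maxI (b i)).

(* regularity defect of the induced map fbar : A/I -> B/J:
   dim_L ker(m/m^2 (x)_K L -> n/n^2) = dim_L(m/m^2 (x)_K L) - dim_L(image)
   = dim_K(m/m^2) - dim_L(image)   (rank-nullity). *)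
Definition rd_gen (A B : comUnitRingType) (f : A -> B)
    (I : A -> Prop) (J : B -> Prop) : nat :=
  (cotdim I - imdim f I J)%N.

Definition rd (A B : comUnitRingType) (f : A -> B) : nat :=
  rd_gen f (@zeroI A) (@zeroI B).

(* Main.v *)
Require Import Defs.
From HB Require Import structures.
From mathcomp Require Import all_boot all_order all_algebra.
From mathcomp Require Import ring zify.
From Stdlib Require Import Classical ClassicalEpsilon.
Import GRing.Theory.
Local Open Scope ring_scope.
Set Implicit Arguments. Unset Strict Implicit.

Definition good (R : comUnitRingType) (N : R -> Prop) :=
  is_ideal N /\ (forall a b, maxI a -> maxI b -> N (a * b)).

Definition indep (R : comUnitRingType) (N : R -> Prop) s (w : 'I_s -> R) :=
  forall b : 'I_s -> R, N (\sum_(i < s) b i * w i) -> forall i, maxI (b i).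

Lemma ideal0 (R : comUnitRingType) (I : R -> Prop) : is_ideal I -> I 0.
Proof. by case. Qed.
Lemma idealD (R : comUnitRingType) (I : R -> Prop) x y : is_ideal I -> I x -> I y -> I (x + y).
Proof. by case=> _ H _; apply: H. Qed.
Lemma idealM (R : comUnitRingType) (I : R -> Prop) r x : is_ideal I -> I x -> I (r * x).
Proof. by case=> _ _ H; apply: H. Qed.
Lemma idealN (R : comUnitRingType) (I : R -> Prop) x : is_ideal I -> I x -> I (- x).
Proof. by move=> hI hx; rewrite -mulN1r; apply: idealM. Qed.
Lemma idealB (R : comUnitRingType) (I : R -> Prop) x y : is_ideal I -> I x -> I y -> I (x - y).
Proof. by move=> hI hx hy; apply: idealD => //; apply: idealN. Qed.
Lemma idealS (R : comUnitRingType) (I : R -> Prop) n (F : 'I_n -> R) :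
  is_ideal I -> (forall i, I (F i)) -> I (\sum_(i < n) F i).
Proof.
move=> hI hF; apply: (big_ind I); [exact: ideal0 | |] => *; [exact: idealD | exact: hF].
Qed.
Lemma idealMr (R : comUnitRingType) (I : R -> Prop) r x : is_ideal I -> I x -> I (x * r).
Proof. by move=> hI hx; rewrite mulrC; apply: idealM. Qed.

Lemma notmaxI (R : comUnitRingType) (x : R) : ~ maxI x -> x \is a GRing.unit.
Proof. by rewrite /maxI => h; apply/negPn/negP. Qed.
Lemma maxI_unit (R : comUnitRingType) (x : R) : x \is a GRing.unit -> ~ maxI x.
Proof. by rewrite /maxI => ->. Qed.
Lemma maxI1 (R : comUnitRingType) : ~ maxI (1 : R).
Proof. apply: maxI_unit; exact: unitr1. Qed.

Lemma good_ideal (R : comUnitRingType) (N : R -> Prop) : good N -> is_ideal N.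
Proof. by case. Qed.
Lemma goodM (R : comUnitRingType) (N : R -> Prop) a b : good N -> maxI a -> maxI b -> N (a * b).
Proof. by case=> _ h; apply: h. Qed.

Lemma good_addI (R : comUnitRingType) (N J : R -> Prop) :
  good N -> is_ideal J -> good (addI N J).
Proof.
move=> [hN hNM] hJ; split; last first.
  by move=> a b ha hb; exists (a * b), 0; split; [apply: hNM|split; [exact: ideal0|rewrite addr0]].
split.
- by exists 0, 0; rewrite addr0; split; [exact: ideal0|split; [exact: ideal0|]].
- move=> x y [a [b [ha [hb ->]]]] [a' [b' [ha' [hb' ->]]]].
  exists (a + a'), (b + b'); split; [exact: idealD|split; [exact: idealD|]]; ring.
- move=> r x [a [b [ha [hb ->]]]]; exists (r * a), (r * b).
  split; [exact: idealM|split; [exact: idealM|]]; ring.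
Qed.

Lemma addI_sub (R : comUnitRingType) (N N' J J' : R -> Prop) :
  (forall x, N x -> N' x) -> (forall x, J x -> J' x) -> forall x, addI N J x -> addI N' J' x.
Proof. move=> h1 h2 x [a [b [ha [hb ->]]]]; exists a, b; split; [exact: h1|split; [exact: h2|by []]]. Qed.

Lemma indep_sub (R : comUnitRingType) (N N' : R -> Prop) s (w : 'I_s -> R) :
  (forall x, N' x -> N x) -> indep N w -> indep N' w.
Proof. by move=> h hw b hb; apply: hw; apply: h. Qed.
Definition catf T n1 n2 (a1 : 'I_n1 -> T) (a2 : 'I_n2 -> T) : 'I_(n1 + n2) -> T :=
  fun i => match split i with inl j => a1 j | inr j => a2 j end.
Lemma catfL T n1 n2 (a1 : 'I_n1 -> T) (a2 : 'I_n2 -> T) j : catf a1 a2 (lshift n2 j) = a1 j.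
Proof. by rewrite /catf -[lshift n2 j]/(unsplit (inl j)) unsplitK. Qed.
Lemma catfR T n1 n2 (a1 : 'I_n1 -> T) (a2 : 'I_n2 -> T) j : catf a1 a2 (rshift n1 j) = a2 j.
Proof. by rewrite /catf -[rshift n1 j]/(unsplit (inr j)) unsplitK. Qed.
Lemma catfP T n1 n2 (a1 : 'I_n1 -> T) (a2 : 'I_n2 -> T) (P : T -> Prop) :
  (forall j, P (a1 j)) -> (forall j, P (a2 j)) -> forall i, P (catf a1 a2 i).
Proof. by move=> h1 h2 i; rewrite /catf; case: (split i). Qed.
Lemma sum_catf (R : comUnitRingType) n1 n2 (F : 'I_(n1 + n2) -> R) :
  \sum_(i < n1 + n2) F i = \sum_(i < n1) F (lshift n2 i) + \sum_(i < n2) F (rshift n1 i).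
Proof. exact: big_split_ord. Qed.

Lemma sum_catf2 (R : comUnitRingType) n1 n2 (a1 b1 : 'I_n1 -> R) (a2 b2 : 'I_n2 -> R) :
  \sum_(i < n1 + n2) catf a1 a2 i * catf b1 b2 i =
  \sum_(i < n1) a1 i * b1 i + \sum_(i < n2) a2 i * b2 i.
Proof.
rewrite sum_catf; congr (_ + _); apply: eq_bigr => i _; by rewrite ?catfL ?catfR.
Qed.

Lemma sqI_good (R : comUnitRingType) : is_local R -> good (sqI (@maxI R)).
Proof.
move=> hl; split; last first.
  move=> a b ha hb; exists 1%N, (fun _ => a), (fun _ => b); split => //.
  by rewrite big_ord1.
split.
- by exists 0%N, (fun _ => 0), (fun _ => 0); split; [case|rewrite big_ord0].
- move=> x y [n1 [a1 [b1 [h1 ->]]]] [n2 [a2 [b2 [h2 ->]]]].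
  exists (n1 + n2)%N, (catf a1 a2), (catf b1 b2); split; last by rewrite sum_catf2.
  move=> i; rewrite /catf; case: (split i) => j; [exact: h1|exact: h2].
- move=> r x [n1 [a1 [b1 [h1 ->]]]]; exists n1, (fun i => r * a1 i), b1; split.
    by move=> i; split; [apply: idealM; [exact: hl| exact: (h1 i).1]|exact: (h1 i).2].
  by rewrite mulr_sumr; apply: eq_bigr => i _; rewrite mulrA.
Qed.

Lemma zeroI_ideal (R : comUnitRingType) : is_ideal (@zeroI R).
Proof. split; rewrite /zeroI; [done|move=> x y -> ->|move=> r x ->]; by rewrite ?addr0 ?mulr0. Qed.

Lemma extI_ideal (A B : comUnitRingType) (f : A -> B) (I : A -> Prop) : is_ideal (extI f I).
Proof.
split.
- by exists 0%N, (fun _ => 0), (fun _ => 0); split; [case|rewrite big_ord0].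
- move=> x y [n1 [a1 [c1 [h1 ->]]]] [n2 [a2 [c2 [h2 ->]]]].
  exists (n1 + n2)%N, (catf a1 a2), (catf c1 c2); split.
    by move=> i; rewrite /catf; case: (split i) => j; [exact: h1|exact: h2].
  rewrite sum_catf; congr (_ + _); apply: eq_bigr => i _; by rewrite ?catfL ?catfR.
- move=> r x [n1 [a1 [c1 [h1 ->]]]]; exists n1, a1, (fun i => r * c1 i); split => //.
  by rewrite mulr_sumr; apply: eq_bigr => i _; rewrite mulrA.
Qed.

Lemma span_ideal (R : comUnitRingType) n (g : 'I_n -> R) : is_ideal (in_span g).
Proof.
split.
- by exists (fun _ => 0); rewrite big1 // => i _; rewrite mul0r.
- move=> x y [c1 ->] [c2 ->]; exists (fun i => c1 i + c2 i).
  by rewrite -big_split; apply: eq_bigr => i _; rewrite mulrDl.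
- move=> r x [c ->]; exists (fun i => r * c i).
  by rewrite mulr_sumr; apply: eq_bigr => i _; rewrite mulrA.
Qed.

Definition span1 (R : comUnitRingType) (y : R) : R -> Prop := fun z => exists r, z = r * y.
Lemma span1_ideal (R : comUnitRingType) (y : R) : is_ideal (span1 y).
Proof.
split.
- by exists 0; rewrite mul0r.
- by move=> x z [r1 ->] [r2 ->]; exists (r1 + r2); rewrite mulrDl.
- by move=> r x [r1 ->]; exists (r * r1); rewrite mulrA.
Qed.

Lemma sum_delta (R : comUnitRingType) n (F : 'I_n -> R) j :
  \sum_(i < n) (if i == j then 1 else 0) * F i = F j.
Proof.
rewrite (bigD1 j) //= eqxx mul1r big1 ?addr0 // => i /negPf ->; by rewrite mul0r.
Qed.
Lemma not_indep (R : comUnitRingType) (N : R -> Prop) s (w : 'I_s -> R) :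
  ~ indep N w -> exists b : 'I_s -> R, N (\sum_(i < s) b i * w i) /\ exists i, ~ maxI (b i).
Proof.
move=> h; apply: NNPP => hn; apply: h => b hb i; apply: NNPP => hi.
by apply: hn; exists b; split => //; exists i.
Qed.

Lemma ext_lift (R : comUnitRingType) s (i0 : 'I_s.+1) (a : 'I_s -> R) (w : 'I_s.+1 -> R) :
  \sum_(i < s.+1) (if unlift i0 i is Some j then a j else 0) * w i =
  \sum_(j < s) a j * w (lift i0 j).
Proof.
rewrite (bigD1_ord i0) //= unlift_none mul0r add0r.
by apply: eq_bigr => j _; rewrite liftK.
Qed.

Lemma step (R : comUnitRingType) (N : R -> Prop) (y : R) s (w : 'I_s -> R) :
  is_local R -> good N -> maxI y -> indep N w ->
  exists t (sg : 'I_t -> 'I_s), (s <= t.+1)%N /\ indep (addI N (span1 y)) (fun j => w (sg j)).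
Proof.
move=> hl hN hy hw.
case: (classic (indep (addI N (span1 y)) w)) => [h|/not_indep [b [hb [i0 hi0]]]].
  by exists s, id; split.
destruct s as [|s]; first by have := ltn_ord i0; rewrite ltn0.
exists s, (lift i0); split => //.
move: hb => [nu' [z' [hnu' [[r' ->] hb]]]].
have ur' : r' \is a GRing.unit.
  apply: notmaxI => hr'; apply: hi0; apply: hw; rewrite hb.
  apply: idealD; [exact: good_ideal|exact|exact: goodM].
move=> a [nu [z [hnu [[r ->] ha]]]].
set k := r / r'.
pose c i := (if unlift i0 i is Some j then a j else 0) - k * b i.
have hc : N (\sum_(i < s.+1) c i * w i).
  have -> : \sum_(i < s.+1) c i * w i = nu - k * nu'.
    rewrite /c.
    under eq_bigr => i _ do rewrite mulrBl -mulrA.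
    rewrite sumrB ext_lift ha -mulr_sumr hb.
    have e : k * r' = r by rewrite /k divrK.
    by rewrite mulrDr mulrA e; ring.
  apply: idealB; [exact: good_ideal hN|exact hnu|apply: idealM; [exact: good_ideal hN|exact hnu']].
have hk : maxI k.
  have := hw c hc i0; rewrite /c unlift_none sub0r => h1.
  have -> : k = - (- (k * b i0)) * (b i0)^-1.
    by rewrite opprK mulrK //; apply: notmaxI.
  by apply: idealMr; [exact: hl|exact: idealN].
move=> j; have := hw c hc (lift i0 j); rewrite /c liftK => h1.
have -> : a j = (a j - k * b (lift i0 j)) + k * b (lift i0 j) by rewrite subrK.
by apply: idealD; [exact: hl|exact: h1|exact: idealMr].
Qed.
Lemma iter (R : comUnitRingType) d (y : 'I_d -> R) : is_local R -> (forall j, maxI (y j)) ->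
  forall (N : R -> Prop) s (w : 'I_s -> R), good N -> indep N w ->
  exists t (sg : 'I_t -> 'I_s), (s <= t + d)%N /\ indep (addI N (in_span y)) (fun j => w (sg j)).
Proof.
move=> hl; elim: d y => [|d IH] y hy N s w hN hw.
  exists s, id; split; first by rewrite addn0.
  apply: indep_sub hw => x [a [z [ha [[c ->] ->]]]].
  by rewrite big_ord0 addr0.
have [t1 [sg1 [hs1 hw1]]] := step hl hN (hy ord0) hw.
have hN1 : good (addI N (span1 (y ord0))) by apply: good_addI => //; exact: span1_ideal.
have [t2 [sg2 [hs2 hw2]]] := IH (fun j => y (lift ord0 j)) (fun j => hy _) _ _ _ hN1 hw1.
exists t2, (fun j => sg1 (sg2 j)); split; first by lia.
apply: indep_sub hw2 => x [a [z [ha [[c ->] ->]]]].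
rewrite (bigD1_ord ord0) //=.
exists (a + c ord0 * y ord0), (\sum_(i < d) c (lift ord0 i) * y (lift ord0 i)).
split; last split; last by rewrite addrA.
  by exists a, (c ord0 * y ord0); split => //; split => //; exists (c ord0).
by exists (fun i => c (lift ord0 i)).
Qed.

Lemma bound (R : comUnitRingType) : noeth_local R -> exists k, forall (N : R -> Prop) s (w : 'I_s -> R),
  good N -> (forall i, maxI (w i)) -> indep N w -> (s <= k)%N.
Proof.
move=> [hn hl].
have [k [g hg]] := hn _ hl.
exists k => N s w hN hwm hw.
have hgm : forall j, maxI (g j).
  by move=> j; apply/hg; exists (fun i => if i == j then 1 else 0); rewrite sum_delta.
have [t [sg [hs ht]]] := iter hl hgm hN hw.
case: t sg hs ht => [|t] sg hs ht; first by rewrite add0n in hs.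
have h1 : addI N (in_span g) (\sum_(i < t.+1) (if i == ord0 then 1 else 0) * w (sg i)).
  rewrite sum_delta.
  exists 0, (w (sg ord0)); split; first exact: ideal0 (good_ideal hN).
  by split; [apply/hg; exact: hwm | rewrite add0r].
have := ht _ h1 ord0; rewrite eqxx => h2; exfalso; exact: maxI1 h2.
Qed.
Definition Pg (S R : comUnitRingType) (f : S -> R) (N : R -> Prop) (s : nat) : Prop :=
  exists x : 'I_s -> S, (forall i, maxI (x i)) /\ indep N (fun i => f (x i)).
Definition Dg (S R : comUnitRingType) (f : S -> R) (N : R -> Prop) := maxdim (Pg f N).

Lemma imdimE (A B : comUnitRingType) (f : A -> B) I J :
  imdim f I J = Dg f (addI (sqI (@maxI B)) J).
Proof. reflexivity. Qed.
Lemma cotdimE (A : comUnitRingType) (I : A -> Prop) :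
  cotdim I = Dg idfun (addI (sqI (@maxI A)) I).
Proof. reflexivity. Qed.

Lemma maxdim_spec (P : nat -> Prop) k : P 0%N -> (forall e, P e -> (e <= k)%N) ->
  P (maxdim P) /\ forall e, P e -> (e <= maxdim P)%N.
Proof.
move=> h0 hk.
have ex : exists d, P d /\ forall e, P e -> (e <= d)%N.
  elim: k hk => [|k IH] hk.
    by exists 0%N; split => // e /hk.
  case: (classic (P k.+1)) => hP; first by exists k.+1.
  apply: IH => e he; have := hk e he; rewrite leq_eqVlt ltnS; case/orP => // /eqP ee.
  by rewrite ee in he.
exact: (epsilon_spec (inhabits 0%N) _ ex).
Qed.

Lemma Dg_spec (S R : comUnitRingType) (f : S -> R) (N : R -> Prop) :
  noeth_local R -> good N -> (forall x, maxI x -> maxI (f x)) ->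
  Pg f N (Dg f N) /\ forall e, Pg f N e -> (e <= Dg f N)%N.
Proof.
move=> hR hN hf; have [k hk] := bound hR.
apply: (maxdim_spec (k := k)).
  by exists (fun _ => 0); split => [[]|b _ []].
move=> e [x [hx hi]]; apply: hk hi => //; move=> i; exact: hf.
Qed.
Lemma Dg_push (S B C : comUnitRingType) (f : S -> B) (g : {rmorphism B -> C})
  (NB : B -> Prop) (NC : C -> Prop) :
  noeth_local C -> good NC ->
  (forall x, maxI x -> maxI (f x)) -> (forall x, maxI x -> maxI (g x)) ->
  (forall z, NB z -> NC (g z)) ->
  (forall e, Pg f NB e -> (e <= Dg f NB)%N) ->
  (Dg (fun x => g (f x)) NC <= Dg f NB)%N.
Proof.
move=> hC hNC hf hg hN hB.
have [[x [hx hi]] _] := Dg_spec hC hNC (fun x hx => hg _ (hf x hx)).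
apply: hB; exists x; split => // b hb i.
have := hi (fun i => g (b i)).
rewrite -(eq_bigr _ (fun i _ => rmorphM g _ _)) -rmorph_sum => /(_ (hN _ hb) i) h.
apply: NNPP => hn; exact: (maxI_unit (rmorph_unit g (notmaxI hn)) h).
Qed.

Lemma good_ext (R : comUnitRingType) (N M : R -> Prop) :
  (forall z, N z <-> M z) -> good M -> good N.
Proof.
move=> e [[h0 hD hM] hMM]; split; last by move=> a b ha hb; apply/e; apply: hMM.
split; [apply/e; exact: h0| move=> x y /e hx /e hy; apply/e; exact: hD
  | move=> r x /e hx; apply/e; exact: hM].
Qed.
Lemma Dg_add (S S' R : comUnitRingType) (h : S -> R) (h' : S' -> R) (sg : S -> S')
  (N N' : R -> Prop) :
  noeth_local R -> good N ->
  (forall x, maxI x -> maxI (h x)) -> (forall x, maxI x -> maxI (h' x)) ->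
  (forall x, maxI x -> maxI (sg x) /\ h x = h' (sg x)) ->
  (forall z, N' z <-> addI N (extI h (@maxI S)) z) ->
  (Dg h' N' + Dg h N)%N = Dg h' N.
Proof.
move=> hR hN hh hh' hsg eN'.
have hN' : good N'.
  by apply: good_ext eN' _; apply: good_addI => //; exact: extI_ideal.
have hNi := good_ideal hN.
have [[x' [hx' hi']] hmax'] := Dg_spec hR hN' hh'.
have [[x [hx hi]] hmax] := Dg_spec hR hN hh.
have [[y' [hy' hj']] hmaxN] := Dg_spec hR hN hh'.
apply/eqP; rewrite eqn_leq; apply/andP; split.
- apply: hmaxN.
  exists (catf x' (fun j => sg (x j))); split.
    by apply: catfP => // j; exact: (hsg _ (hx j)).1.
  move=> b hb.
  set b1 := fun j => b (lshift (Dg h N) j).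
  set b2 := fun j => b (rshift (Dg h' N') j).
  have e : \sum_(i < Dg h' N' + Dg h N) b i * h' (catf x' (fun j => sg (x j)) i)
      = \sum_(i < Dg h' N') b1 i * h' (x' i) + \sum_(j < Dg h N) b2 j * h (x j).
    rewrite sum_catf; congr (_ + _); apply: eq_bigr => i _; rewrite ?catfL ?catfR //.
    by rewrite -(hsg _ (hx i)).2.
  rewrite e in hb.
  have h1 : forall i, maxI (b1 i).
    apply: hi'; apply/eN'.
    exists (\sum_(i < Dg h' N') b1 i * h' (x' i) + \sum_(j < Dg h N) b2 j * h (x j)),
      (\sum_(j < Dg h N) (- b2 j) * h (x j)).
    split => //; split.
      by exists (Dg h N), x, (fun j => - b2 j); split.
    rewrite -addrA -big_split /= [X in _ = _ + X]big1 ?addr0 // => j _; by rewrite mulNr addrN.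
  have h2 : N (\sum_(i < Dg h' N') b1 i * h' (x' i)).
    by apply: idealS => // i; apply: goodM; [exact: hN|exact: h1|exact: hh' _ (hx' i)].
  have h3 : forall j, maxI (b2 j).
    apply: hi.
    have -> : \sum_(j < Dg h N) b2 j * h (x j) =
      (\sum_(i < Dg h' N') b1 i * h' (x' i) + \sum_(j < Dg h N) b2 j * h (x j))
      - \sum_(i < Dg h' N') b1 i * h' (x' i) by rewrite addrC addKr.
    exact: idealB.
  move=> i; rewrite -(splitK i); case: (split i) => j /=; [exact: h1|exact: h3].
-
  pose M := addI N (in_span (fun j => h (x j))).
  have hM : good M by apply: good_addI => //; exact: span_ideal.
  have claim : forall a, maxI a -> M (h a).
    move=> a ha; apply: NNPP => hna.
    have : ((Dg h N).+1 <= Dg h N)%N; last by rewrite ltnn.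
    apply: hmax.
    exists (fun i => if unlift ord_max i is Some j then x j else a); split.
      by move=> i; case: (unlift ord_max i).
    move=> b hb.
    rewrite (bigD1_ord ord_max) //= unlift_none in hb.
    rewrite (eq_bigr (fun j => b (lift ord_max j) * h (x j))) in hb; last by move=> j _; rewrite liftK.
    set bm := b ord_max in hb.
    set Sm := \sum_(j < Dg h N) b (lift ord_max j) * h (x j) in hb.
    case: (classic (maxI bm)) => hbm.
      have hS : N Sm.
        have -> : Sm = (bm * h a + Sm) - bm * h a by rewrite addrC addKr.
        by apply: idealB => //; apply: goodM => //; exact: hh.
      have hl : forall j, maxI (b (lift ord_max j)) by apply: hi.
      by move=> i; case: (unliftP ord_max i) => [j ->|->].
    exfalso; apply: hna.
    exists (bm^-1 * (bm * h a + Sm)), (\sum_(j < Dg h N) (- (bm^-1 * b (lift ord_max j))) * h (x j)).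
    split; first exact: idealM.
    split; first by exists (fun j => - (bm^-1 * b (lift ord_max j))).
    have ub : bm \is a GRing.unit by exact: notmaxI.
    rewrite mulrDr mulrA mulVr // mul1r -addrA.
    rewrite [X in _ = _ + X](_ : _ = 0) ?addr0 //.
    rewrite /Sm mulr_sumr -big_split /= big1 // => j _; by rewrite mulNr mulrA addrN.
  have [t [sg2 [hs ht]]] := iter (hR.2) (fun j => hh _ (hx j)) hN hj'.
  have : (t <= Dg h' N')%N.
    apply: hmax'; exists (fun j => y' (sg2 j)); split => //.
    apply: indep_sub ht => z /eN' [a [w [ha [[n [a2 [c [hc ->]]]] ->]]]].
    apply: idealD; first exact: good_ideal hM.
      by exists a, 0; split => //; split; [exact: ideal0 (span_ideal _)|rewrite addr0].
    apply: idealS; first exact: good_ideal hM.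
    by move=> i; apply: idealM; [exact: good_ideal hM|exact: claim].
  by move: hs; lia.
Qed.
Lemma sqI_push (B C : comUnitRingType) (g : {rmorphism B -> C}) z :
  (forall x, maxI x -> maxI (g x)) -> sqI (@maxI B) z -> sqI (@maxI C) (g z).
Proof.
move=> hg [n [a [b [hab ->]]]]; exists n, (fun i => g (a i)), (fun i => g (b i)); split.
  by move=> i; split; apply: hg; [exact: (hab i).1|exact: (hab i).2].
by rewrite rmorph_sum; apply: eq_bigr => i _; rewrite rmorphM.
Qed.

Lemma addI_push (B C : comUnitRingType) (g : {rmorphism B -> C}) (J : B -> Prop) (J' : C -> Prop) z :
  (forall x, maxI x -> maxI (g x)) -> (forall x, J x -> J' (g x)) ->
  addI (sqI (@maxI B)) J z -> addI (sqI (@maxI C)) J' (g z).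
Proof.
move=> hg hJ [a [b [ha [hb ->]]]]; exists (g a), (g b); split; first exact: sqI_push.
by split; [exact: hJ|rewrite rmorphD].
Qed.

Lemma addI0E (R : comUnitRingType) (J : R -> Prop) z :
  addI (sqI (@maxI R)) J z <-> addI (addI (sqI (@maxI R)) (@zeroI R)) J z.
Proof.
split.
  move=> [a [b [ha [hb ->]]]]; exists a, b; split => //.
  by exists a, 0; split => //; split; [|rewrite addr0].
move=> [a [b [[a1 [b1 [ha1 [hb1 ->]]]] [hb ->]]]]; exists a1, b; split => //.
by rewrite hb1 addr0.
Qed.

Lemma zeroI_push (B C : comUnitRingType) (g : {rmorphism B -> C}) x :
  zeroI x -> zeroI (g x).
Proof. by rewrite /zeroI => ->; rewrite rmorph0. Qed.

Unset Implicit Arguments.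
Set Strict Implicit.

Theorem corollary3p9 (A B C : comUnitRingType)
  (phi : {rmorphism A -> B}) (psi : {rmorphism B -> C}) :
  noeth_local A -> noeth_local B -> noeth_local C ->
  local_hom phi -> local_hom psi ->
  let mB := extI phi (@maxI A) in
  let mC := extI (fun a => psi (phi a)) (@maxI A) in
  [/\ (rd (fun a => psi (phi a)))%:Z
        = (rd phi)%:Z + (rd psi)%:Z - (rd_gen psi mB mC)%:Z,
      (rd (fun a => psi (phi a)))%:Z
        = (rd phi)%:Z + ((rd_gen (@idfun B) (@zeroI B) mB)%:Z
                          - (rd_gen (@idfun C) (@zeroI C) mC)%:Z),
      (rd phi <= rd (fun a => psi (phi a)))%N &
      (rd (fun a => psi (phi a)) <= rd phi + rd psi)%N].
Proof.
move=> hA hB hC hphi hpsi mB mC.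
have gA0 : good (addI (sqI (@maxI A)) (@zeroI A)).
  by apply: good_addI; [exact: sqI_good hA.2|exact: zeroI_ideal].
have gB0 : good (addI (sqI (@maxI B)) (@zeroI B)).
  by apply: good_addI; [exact: sqI_good hB.2|exact: zeroI_ideal].
have gC0 : good (addI (sqI (@maxI C)) (@zeroI C)).
  by apply: good_addI; [exact: sqI_good hC.2|exact: zeroI_ideal].
have gBm : good (addI (sqI (@maxI B)) mB).
  by apply: good_addI; [exact: sqI_good hB.2|exact: extI_ideal].
have gCm : good (addI (sqI (@maxI C)) mC).
  by apply: good_addI; [exact: sqI_good hC.2|exact: extI_ideal].
have idl (R : comUnitRingType) : forall x : R, maxI x -> maxI (idfun x) by [].
have hpp : forall x, maxI x -> maxI (psi (phi x)) by move=> x hx; apply: hpsi; apply: hphi.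
have sA := (Dg_spec hA gA0 (@idl A)).2.
have sB := (Dg_spec hB gB0 (@idl B)).2.
have sBm := (Dg_spec hB gBm (@idl B)).2.
have sBphi := (Dg_spec hB gB0 hphi).2.
have hva : (Dg phi (addI (sqI (@maxI B)) (@zeroI B)) <= Dg idfun (addI (sqI (@maxI A)) (@zeroI A)))%N.
  apply: (Dg_push (f := idfun) (g := phi)) => //.
  by move=> z; apply: addI_push => // x; apply: zeroI_push.
have huv : (Dg (fun a => psi (phi a)) (addI (sqI (@maxI C)) (@zeroI C))
            <= Dg phi (addI (sqI (@maxI B)) (@zeroI B)))%N.
  apply: (Dg_push (f := phi) (g := psi)) => //.
  by move=> z; apply: addI_push => // x; apply: zeroI_push.
have hwe : (Dg psi (addI (sqI (@maxI C)) (@zeroI C)) <= Dg idfun (addI (sqI (@maxI B)) (@zeroI B)))%N.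
  apply: (Dg_push (f := idfun) (g := psi)) => //.
  by move=> z; apply: addI_push => // x; apply: zeroI_push.
have hrq : (Dg psi (addI (sqI (@maxI C)) mC) <= Dg idfun (addI (sqI (@maxI B)) mB))%N.
  apply: (Dg_push (f := idfun) (g := psi)) => //.
  move=> z; apply: addI_push => // x [n [a [c [ha ->]]]].
  exists n, a, (fun i => psi (c i)); split => //.
  by rewrite rmorph_sum; apply: eq_bigr => i _; rewrite rmorphM.
have eB : (Dg idfun (addI (sqI (@maxI B)) mB) + Dg phi (addI (sqI (@maxI B)) (@zeroI B)))%N
          = Dg idfun (addI (sqI (@maxI B)) (@zeroI B)).
  apply: (Dg_add (sg := phi)) => //.
  - by move=> x hx; split; [exact: hphi|].
  - by move=> z; exact: (addI0E mB z).
have eC1 : (Dg psi (addI (sqI (@maxI C)) mC) + Dg (fun a => psi (phi a)) (addI (sqI (@maxI C)) (@zeroI C)))%N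
          = Dg psi (addI (sqI (@maxI C)) (@zeroI C)).
  apply: (Dg_add (sg := phi)) => //.
  - by move=> x hx; split; [exact: hphi|].
  - by move=> z; exact: (addI0E mC z).
have eC2 : (Dg idfun (addI (sqI (@maxI C)) mC) + Dg (fun a => psi (phi a)) (addI (sqI (@maxI C)) (@zeroI C)))%N
          = Dg idfun (addI (sqI (@maxI C)) (@zeroI C)).
  apply: (Dg_add (sg := fun a => psi (phi a))) => //.
  - by move=> x hx; split; [exact: hpp|].
  - by move=> z; exact: (addI0E mC z).
rewrite /rd /rd_gen !imdimE !cotdimE.
split; lia.
Qed.
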